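(* There is an absolute constant $C$ such that for all $x\ge0$, $s>0$, $\sigma\in(1/2,1)$ and $\rho\ge1$, with $T=T(s,\sigma)$ and $F_\pm$ as in the context, \[\sup_{0<t\le T}|F_\pm(t)|\le C(s+1)\qquad\text{and}\qquad\|F_\pm\|_{v(\rho),(0,T]}\le C(s+1),\] where the variation is taken in the variable $t$.
   Context: Fix $x\ge0$, $s>0$, $\sigma\in(1/2,1)$. Let $Q_s(t)=x(e^t-1)-s\sqrt{e^{2t}-1}$ and $T=T(s,\sigma)=\sup\{t\in(0,1]:\ Q_s(t)<\sigma/(1+x)\}$. For $0<t\le1$ define \[F_\pm(t)=\frac{\bigl|x(e^t-1)\pm s\sqrt{e^{2t}-1}\bigr|\wedge\frac{\sigma}{1+x}}{\sqrt{1-e^{-2t}}},\] where $a\wedge b=\min(a,b)$. For $1\le\rho<\infty$ and an interval $I$, $\|\phi\|_{v(\rho),I}=\sup(\sum_{i=1}^n|\phi(t_i)-\phi(t_{i-1})|^\rho)^{1/\rho}$ over finite increasing sequences in $I$. *)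

(* Defs.v *)
From HB Require Import structures.
From mathcomp Require Import all_boot all_order all_algebra.
From mathcomp Require Import all_classical all_reals all_analysis.
Set Implicit Arguments. Unset Strict Implicit. Unset Printing Implicit Defensive.
Import Order.TTheory GRing.Theory Num.Theory.
Local Open Scope classical_set_scope.
Local Open Scope ring_scope.

Section Defs.
Variable R : realType.

Definition Qs (x s t : R) : R :=
  x * (expR t - 1) - s * Num.sqrt (expR (2 * t) - 1).

Definition Tcut (x s sigma : R) : R :=
  sup [set t : R | 0 < t <= 1 /\ Qs x s t < sigma / (1 + x)].

Definition Fplus (x s sigma t : R) : R :=
  Num.min `|x * (expR t - 1) + s * Num.sqrt (expR (2 * t) - 1)| (sigma / (1 + x))
  / Num.sqrt (1 - expR (- (2 * t))).

Definition Fminus (x s sigma t : R) : R :=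
  Num.min `|x * (expR t - 1) - s * Num.sqrt (expR (2 * t) - 1)| (sigma / (1 + x))
  / Num.sqrt (1 - expR (- (2 * t))).

Definition pvar (rho : R) (phi : R -> R) (I : set R) : \bar R :=
  ereal_sup [set y : \bar R | exists (n : nat) (t : nat -> R),
    (forall i : nat, (i <= n)%N -> I (t i)) /\
    (forall i : nat, (i < n)%N -> t i < t i.+1) /\
    y = ((\sum_(i < n) `|phi (t i.+1) - phi (t i)| `^ rho) `^ rho^-1)%:E].

Definition supabs (phi : R -> R) (I : set R) : \bar R :=
  ereal_sup [set `|phi t|%:E | t in I].

End Defs.

(* Main.v *)
Require Import Defs.
From HB Require Import structures.
From mathcomp Require Import all_boot all_order all_algebra.
From mathcomp Require Import all_classical all_reals all_analysis.
From mathcomp Require Import ring lra.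
Import Order.TTheory GRing.Theory Num.Theory.
Local Open Scope ring_scope.

Section Gen.
Variable R : realType.
Implicit Types a b d p q : R.

Definition pp d := Num.max d 0.

Lemma pp_cases d : (0 <= d /\ pp d = d) \/ (d <= 0 /\ pp d = 0).
Proof.
rewrite /pp; case: (lerP 0 d) => h; [left|right]; split => //; exact: ltW.
Qed.

Lemma min_cases a b : (a <= b /\ Num.min a b = a) \/ (b <= a /\ Num.min a b = b).
Proof.
case: (lerP a b) => h; [left|right]; split => //; exact: ltW.
Qed.

Lemma max_cases a b : (b <= a /\ Num.max a b = a) \/ (a <= b /\ Num.max a b = b).
Proof.
case: (lerP b a) => h; [left|right]; split => //; exact: ltW.
Qed.

Lemma abs_cases d : (0 <= d /\ `|d| = d) \/ (d <= 0 /\ `|d| = - d).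
Proof.
case: (lerP 0 d) => h; [left|right]; split => //; [exact: ger0_norm|exact: ltW|exact: ltr0_norm].
Qed.

Lemma sq_le p q : 0 <= p -> 0 <= q -> p ^+ 2 <= q ^+ 2 -> p <= q.
Proof. move=> *; nra. Qed.

Lemma var_pp (m : nat -> R) n M :
  (forall i, (i <= n)%N -> 0 <= m i <= M) ->
  \sum_(i < n) `|m i.+1 - m i| <= 2 * \sum_(i < n) pp (m i.+1 - m i) + M.
Proof.
move=> hm.
have E : forall k, \sum_(i < k) `|m i.+1 - m i| =
   2 * \sum_(i < k) pp (m i.+1 - m i) - (m k - m 0%N).
  elim=> [|k IH]; first by rewrite !big_ord0; ring.
  rewrite !big_ord_recr /= IH mulrDr.
  case: (pp_cases (m k.+1 - m k)) => -[h1 ->];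
  case: (abs_cases (m k.+1 - m k)) => -[h2 ->]; lra.
rewrite E; have := hm n (leqnn n); have := hm 0%N (leq0n n).
move=> /andP[? ?] /andP[? ?]; lra.
Qed.

Lemma Pmin (m f1 f2 h : nat -> R) n M K :
  0 <= M -> 0 <= K -> 0 <= f1 0%N ->
  (forall k, (k < n)%N -> f1 k <= f1 k.+1 /\ f2 k <= f2 k.+1 /\ h k.+1 <= h k) ->
  (forall k, (k <= n)%N -> f2 k <= K /\ m k <= M /\ m k = Num.min (f1 k - f2 k) (h k)) ->
  \sum_(i < n) pp (m i.+1 - m i) <= M + K.
Proof.
move=> M0 K0 f10 hmon hb.
suff : forall j, (j <= n)%N -> \sum_(i < j) pp (m i.+1 - m i) <= f1 j - f1 0%N /\
   \sum_(i < j) pp (m i.+1 - m i) <= M + K by move/(_ n (leqnn n)) => [].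
elim=> [|j IH] hj; first by rewrite big_ord0; lra.
have [A B] := IH (ltnW hj).
have [h1 [h2 h3]] := hmon j hj.
have [K1 [M1 e1]] := hb j (ltnW hj).
have [K2 [M2 e2]] := hb j.+1 hj.
rewrite big_ord_recr /=.
case: (min_cases (f1 j - f2 j) (h j)) => -[c1 c1e];
case: (min_cases (f1 j.+1 - f2 j.+1) (h j.+1)) => -[c2 c2e];
rewrite c1e in e1; rewrite c2e in e2;
case: (pp_cases (m j.+1 - m j)) => -[p1 ->]; split; lra.
Qed.

Lemma Pmin2 (m a b h : nat -> R) n :
  (forall k, (k < n)%N -> a k <= a k.+1 /\ b k <= b k.+1 /\ h k.+1 <= h k) ->
  (forall k, (k <= n)%N -> m k = Num.min (a k - b k) (h k)) ->
  \sum_(i < n) pp (m i.+1 - m i) <= a n - a 0%N.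
Proof.
move=> hmon hb.
suff : forall j, (j <= n)%N -> \sum_(i < j) pp (m i.+1 - m i) <= a j - a 0%N by apply.
elim=> [|j IH] hj; first by rewrite big_ord0; lra.
have A := IH (ltnW hj).
have [h1 [h2 h3]] := hmon j hj.
have e1 := hb j (ltnW hj).
have e2 := hb j.+1 hj.
rewrite big_ord_recr /=.
case: (min_cases (a j - b j) (h j)) => -[c1 c1e];
case: (min_cases (a j.+1 - b j.+1) (h j.+1)) => -[c2 c2e];
rewrite c1e in e1; rewrite c2e in e2;
case: (pp_cases (m j.+1 - m j)) => -[p1 ->]; lra.
Qed.

Lemma pp_pp a b : pp (pp a - pp b) <= pp (a - b).
Proof.
move: (pp_cases a) (pp_cases b) (pp_cases (a-b)) (pp_cases (pp a - pp b))
  => [[? ?]|[? ?]] [[? ?]|[? ?]] [[? ?]|[? ?]] [[? ?]|[? ?]]; lra.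
Qed.

Lemma max_var a0 a1 b0 b1 :
  `|Num.max a1 b1 - Num.max a0 b0| <= `|a1 - a0| + `|b1 - b0|.
Proof.
move: (max_cases a1 b1) (max_cases a0 b0) (abs_cases (a1 - a0)) (abs_cases (b1 - b0))
  (abs_cases (Num.max a1 b1 - Num.max a0 b0))
  => [[? ?]|[? ?]] [[? ?]|[? ?]] [[? ?]|[? ?]] [[? ?]|[? ?]] [[? ?]|[? ?]]; lra.
Qed.

End Gen.
Arguments pp {R}.
Arguments pp_cases {R}.
Arguments min_cases {R}.
Arguments max_cases {R}.
Arguments abs_cases {R}.
Arguments sq_le {R}.
Arguments var_pp {R}.
Arguments Pmin {R}.
Arguments Pmin2 {R}.
Arguments pp_pp {R}.
Arguments max_var {R}.
Section H.
Variable R : realType.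
Lemma superadd {a b rho : R} : 0 <= a -> 0 <= b -> 1 <= rho ->
  a `^ rho + b `^ rho <= (a + b) `^ rho.
Proof.
move=> a0 b0 r1.
have rn0 : rho != 0 by apply/eqP => h; rewrite h in r1; lra.
case: (eqVneq a 0) => [->|an0]; first by rewrite powR0 // !add0r.
case: (eqVneq b 0) => [->|bn0]; first by rewrite powR0 // !addr0.
have ap : 0 < a by rewrite lt_def an0 a0.
have bp : 0 < b by rewrite lt_def bn0 b0.
set S := a + b.
have Sp : 0 < S by rewrite /S; lra.
have key : forall c, 0 < c -> c <= S -> c `^ rho <= S `^ rho * (c / S).
  move=> c cp cS.
  have e1 : c = S * (c / S) by rewrite mulrCA divff ?mulr1 // gt_eqF.
  rewrite {1}e1 powRM ?(ltW Sp) ?divr_ge0 ?(ltW cp) ?(ltW Sp) //.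
  rewrite ler_wpM2l ?powR_ge0 //.
  apply: ge1r_powR => //; apply/andP; split; first by rewrite divr_gt0.
  by rewrite ler_pdivrMr // mul1r.
have ha := key a ap (ltac:(rewrite /S; lra)).
have hb := key b bp (ltac:(rewrite /S; lra)).
have e : S `^ rho * (a / S) + S `^ rho * (b / S) = S `^ rho.
  by rewrite -mulrDr -mulrDl divff ?mulr1 // gt_eqF.
lra.
Qed.

Lemma rho_le (d : nat -> R) n rho : 1 <= rho -> (forall i, 0 <= d i) ->
  (\sum_(i < n) d i `^ rho) `^ rho^-1 <= \sum_(i < n) d i.
Proof.
move=> r1 d0.
have rn0 : rho != 0 by apply/eqP => h; rewrite h in r1; lra.
have sge0 : forall k, 0 <= \sum_(i < k) d i by move=> k; apply: sumr_ge0.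
have H : forall k, \sum_(i < k) d i `^ rho <= (\sum_(i < k) d i) `^ rho.
  elim=> [|k IH]; first by rewrite !big_ord0 powR0.
  rewrite !big_ord_recr /=.
  have := superadd (sge0 k) (d0 k) r1; lra.
apply: le_trans (ge0_ler_powR _ _ _ (H n)) _.
- by rewrite invr_ge0; lra.
- by rewrite nnegrE; apply: sumr_ge0 => i _; exact: powR_ge0.
- by rewrite nnegrE powR_ge0.
by rewrite -powRrM divff // powRr1.
Qed.
End H.
Arguments rho_le {R}.
Section A.
Variable R : realType.
Implicit Types x s sigma t u : R.

Lemma sq_le' (p q : R) : 0 <= p -> 0 <= q -> p ^+ 2 <= q ^+ 2 -> p <= q.
Proof. move=> *; nra. Qed.

Definition Dd t : R := Num.sqrt (1 - expR (- (2 * t))).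
Definition f1 x t : R := x * (expR t - 1) / Dd t.
Definition f2 s t : R := s * expR t.
Definition hh x sigma t : R := sigma / (1 + x) / Dd t.

Lemma E2 t : expR (2 * t) = expR t ^+ 2.
Proof. by rewrite -expRM_natl. Qed.

Lemma E_gt1 {t} : 0 < t -> 1 < expR t.
Proof. by move=> ?; rewrite expR_gt1. Qed.

Lemma Dd_gt0 {t} : 0 < t -> 0 < Dd t.
Proof. move=> t0; rewrite /Dd sqrtr_gt0 subr_gt0 expR_lt1; lra. Qed.

Lemma Dd_sq {t} : 0 < t -> Dd t ^+ 2 = 1 - (expR t ^+ 2)^-1.
Proof.
move=> t0; rewrite /Dd sqr_sqrtr; first by rewrite expRN E2.
rewrite subr_ge0; apply: ltW; rewrite expR_lt1; lra.
Qed.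

Lemma W_eq {t} : 0 < t -> Num.sqrt (expR (2 * t) - 1) = Dd t * expR t.
Proof.
move=> t0; have D0 := Dd_gt0 t0; have E1 := E_gt1 t0.
have -> : expR (2 * t) - 1 = (Dd t * expR t) ^+ 2.
  rewrite exprMn Dd_sq // E2; field.
  apply: lt0r_neq0; lra.
by rewrite sqrtr_sqr ger0_norm // mulr_ge0 // ?ltW //; lra.
Qed.

Lemma min_div (a b D : R) : 0 < D -> Num.min a b / D = Num.min (a / D) (b / D).
Proof.
move=> D0; case: (lerP a b) => h.
  by rewrite min_l // ler_pM2r // invr_gt0.
by rewrite min_r ?ltW // ltr_pM2r // invr_gt0.
Qed.

Lemma Fplus_eq x s sigma t : 0 < t ->
  Fplus x s sigma t = Num.min `|f1 x t + f2 s t| (hh x sigma t).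
Proof.
move=> t0; have D0 := Dd_gt0 t0.
rewrite /Fplus W_eq // min_div // /hh; congr Num.min.
rewrite -[X in _ / X](ger0_norm (ltW D0)) -normfV -normrM; congr `|_|.
rewrite /f1 /f2; field; exact: lt0r_neq0.
Qed.

Lemma Fminus_eq x s sigma t : 0 < t ->
  Fminus x s sigma t = Num.min `|f1 x t - f2 s t| (hh x sigma t).
Proof.
move=> t0; have D0 := Dd_gt0 t0.
rewrite /Fminus W_eq // min_div // /hh; congr Num.min.
rewrite -[X in _ / X](ger0_norm (ltW D0)) -normfV -normrM; congr `|_|.
rewrite /f1 /f2; field; exact: lt0r_neq0.
Qed.

Lemma Dd_le t u : 0 < t -> t <= u -> Dd t <= Dd u.
Proof.
move=> t0 tu; rewrite /Dd ler_sqrt.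
  by rewrite lerB // ler_expR; lra.
rewrite subr_ge0; apply: ltW; rewrite expR_lt1; lra.
Qed.

Lemma hh_le x sigma t u : 0 <= x -> 0 <= sigma -> 0 < t -> t <= u ->
  hh x sigma u <= hh x sigma t.
Proof.
move=> x0 s0 t0 tu; rewrite /hh ler_wpM2l //.
  by rewrite divr_ge0 //; lra.
have Dt := Dd_gt0 t0; have Du : 0 < Dd u by apply: Dd_gt0; lra.
by rewrite lef_pV2 ?posrE // Dd_le.
Qed.

Lemma f2_le s t u : 0 <= s -> t <= u -> f2 s t <= f2 s u.
Proof. by move=> s0 tu; rewrite /f2 ler_wpM2l // ler_expR. Qed.

Lemma f1_ge0 x t : 0 <= x -> 0 < t -> 0 <= f1 x t.
Proof.
move=> x0 t0; have := Dd_gt0 t0; have := E_gt1 t0 => ? ?.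
rewrite /f1 divr_ge0 ?mulr_ge0 //; lra.
Qed.

Lemma f1_sq x t : 0 < t ->
  f1 x t ^+ 2 = x ^+ 2 * (expR t ^+ 2 * ((expR t - 1) / (expR t + 1))).
Proof.
move=> t0; have := Dd_gt0 t0; have := E_gt1 t0 => E1 D0.
rewrite /f1 expr_div_n exprMn Dd_sq //; field.
by apply/and3P; split; apply: lt0r_neq0; nra.
Qed.

Lemma phi_le (y z : R) : 1 < y -> y <= z ->
  y ^+ 2 * ((y - 1) / (y + 1)) <= z ^+ 2 * ((z - 1) / (z + 1)).
Proof.
move=> y1 yz; apply: ler_pM.
- by apply: sqr_ge0.
- by rewrite divr_ge0; lra.
- by rewrite ler_pXn2r // nnegrE; lra.
rewrite ler_pdivrMr; last lra.
rewrite mulrAC ler_pdivlMr; last lra.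
nra.
Qed.

Lemma f1_le x t u : 0 <= x -> 0 < t -> t <= u -> f1 x t <= f1 x u.
Proof.
move=> x0 t0 tu; have u0 : 0 < u by lra.
apply: sq_le'; rewrite ?f1_ge0 // !f1_sq //.
rewrite ler_wpM2l ?sqr_ge0 //; apply: phi_le; first exact: E_gt1.
by rewrite ler_expR.
Qed.

Lemma f1hh x sigma t : 0 <= x -> 0 < t ->
  f1 x t * hh x sigma t = (x * (sigma / (1 + x))) * (expR t ^+ 2 / (expR t + 1)).
Proof.
move=> x0 t0; have := Dd_gt0 t0; have := E_gt1 t0 => E1 D0.
rewrite /f1 /hh.
have -> : x * (expR t - 1) / Dd t * (sigma / (1 + x) / Dd t) =
   x * (expR t - 1) * (sigma / (1 + x)) / (Dd t ^+ 2).
  by field; repeat (apply/andP; split); apply: lt0r_neq0; nra.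
rewrite Dd_sq //; field.
by repeat (apply/andP; split); apply: lt0r_neq0; nra.
Qed.

Lemma hh_ge0 x sigma t : 0 <= x -> 0 <= sigma -> 0 < t -> 0 <= hh x sigma t.
Proof.
move=> x0 s0 t0; have := Dd_gt0 t0 => ?.
rewrite /hh !divr_ge0 //; lra.
Qed.

Lemma e_ge1 : 1 <= expR (1 : R).
Proof. by apply: ltW; rewrite expR_gt1. Qed.

Lemma E_le_e {t} : t <= 1 -> expR t <= expR 1.
Proof. by rewrite ler_expR. Qed.

Lemma minf1h_le x sigma t : 0 <= x -> 0 <= sigma -> sigma < 1 -> 0 < t -> t <= 1 ->
  Num.min (f1 x t) (hh x sigma t) <= expR 1.
Proof.
move=> x0 s0 s1 t0 t1.
have E1 := E_gt1 t0; have Ee := E_le_e t1; have e1 := e_ge1.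
have xc : x * (sigma / (1 + x)) <= 1.
  rewrite mulrA ler_pdivrMr; last lra.
  nra.
have xc0 : 0 <= x * (sigma / (1 + x)) by rewrite mulr_ge0 // divr_ge0 //; lra.
have Ef : expR t ^+ 2 / (expR t + 1) <= expR t.
  rewrite ler_pdivrMr; last lra.
  nra.
have Ef0 : 0 <= expR t ^+ 2 / (expR t + 1) by rewrite divr_ge0 ?sqr_ge0 //; lra.
have P := f1hh x sigma t x0 t0.
have h1 := f1_ge0 x t x0 t0; have h2 := hh_ge0 x sigma t x0 s0 t0.
set m := Num.min _ _.
have m0 : 0 <= m by rewrite /m le_min h1 h2.
have m1 : m <= f1 x t by rewrite /m ge_min lexx.
have m2 : m <= hh x sigma t by rewrite /m ge_min lexx orbT.
have mm : m * m <= f1 x t * hh x sigma t by apply: ler_pM.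
have : x * (sigma / (1 + x)) * (expR t ^+ 2 / (expR t + 1)) <= 1 * expR t.
  by apply: ler_pM.
move=> H; apply: sq_le'; [exact: m0|lra|]; nra.
Qed.




Lemma Fplus_bnd x s sigma t : 0 <= x -> 0 <= s -> 0 <= sigma -> sigma < 1 -> 0 < t -> t <= 1 ->
  Fplus x s sigma t = Num.min (f1 x t + f2 s t) (hh x sigma t) /\
  0 <= Fplus x s sigma t <= expR 1 * (s + 1).
Proof.
move=> x0 s0 g0 g1 t0 t1.
have a1 := f1_ge0 x t x0 t0; have a3 := hh_ge0 x sigma t x0 g0 t0.
have a2 : 0 <= f2 s t by rewrite /f2 mulr_ge0 // expR_ge0.
have a4 : f2 s t <= s * expR 1 by rewrite /f2 ler_wpM2l // E_le_e.
have a5 := minf1h_le x sigma t x0 g0 g1 t0 t1.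
rewrite Fplus_eq // ger0_norm; last lra.
split => //.
move: (min_cases (f1 x t + f2 s t) (hh x sigma t)) (min_cases (f1 x t) (hh x sigma t))
  => [[? ->]|[? ->]] [[? e]|[? e]]; rewrite e in a5; apply/andP; split; lra.
Qed.

End A.
Arguments sq_le' {R}.
Arguments Dd {R}.
Arguments f1 {R}.
Arguments f2 {R}.
Arguments hh {R}.
Arguments E2 {R}.
Arguments E_gt1 {R t}.
Arguments Dd_gt0 {R t}.
Arguments Dd_sq {R t}.
Arguments W_eq {R t}.
Arguments min_div {R}.
Arguments Fplus_eq {R}.
Arguments Fminus_eq {R}.
Arguments Dd_le {R}.
Arguments hh_le {R}.
Arguments f2_le {R}.
Arguments f1_ge0 {R}.
Arguments f1_sq {R}.
Arguments phi_le {R}.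
Arguments f1_le {R}.
Arguments f1hh {R}.
Arguments hh_ge0 {R}.
Arguments e_ge1 {R}.
Arguments E_le_e {R t}.
Arguments minf1h_le {R}.
Arguments Fplus_bnd {R}.
Section B.
Variable R : realType.
Implicit Types x s sigma t u : R.

Lemma Fminus_bnd x s sigma t : 0 <= x -> 0 <= s -> 0 <= sigma -> sigma < 1 -> 0 < t -> t <= 1 ->
  0 <= Fminus x s sigma t <= expR 1 * (s + 1).
Proof.
move=> x0 s0 g0 g1 t0 t1.
have [_ /andP[_ B]] := Fplus_bnd x s sigma t x0 s0 g0 g1 t0 t1.
have a1 := f1_ge0 x t x0 t0; have a3 := hh_ge0 x sigma t x0 g0 t0.
have a2 : 0 <= f2 s t by rewrite /f2 mulr_ge0 // expR_ge0.
move: B; rewrite Fminus_eq // Fplus_eq // ger0_norm; last lra.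
move=> B; apply/andP; split; first by rewrite le_min normr_ge0.
apply: le_trans B; rewrite le_min !ge_min lexx orbT andbT.
apply/orP; left; apply/ler_normlP; split; lra.
Qed.

Lemma min_abs (a h : R) : 0 <= h ->
  Num.min `|a| h = Num.max (pp (Num.min a h)) (pp (Num.min (- a) h)).
Proof.
move=> h0; rewrite /pp; case: (abs_cases a) => -[ha ->].
  have u0 : 0 <= Num.min a h by rewrite le_min ha h0.
  have v0 : Num.min (-a) h <= 0 by rewrite ge_min; apply/orP; left; lra.
  by rewrite (max_r v0) (max_l u0) (max_l u0).
have u0 : 0 <= Num.min (- a) h by rewrite le_min h0 andbT; lra.
have v0 : Num.min a h <= 0 by rewrite ge_min ha.
by rewrite (max_r v0) (max_l u0) (max_r u0).
Qed.
End B.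
Arguments Fminus_bnd {R}. Arguments min_abs {R}.
Section C.
Variable R : realType.
Implicit Types x s sigma : R.

Lemma pp_bnd (a b : R) : a <= b -> 0 <= b -> 0 <= pp a <= b.
Proof. by move=> *; case: (pp_cases a) => -[? ->]; apply/andP; split; lra. Qed.

Lemma var_plus x s sigma (t : nat -> R) n :
 0 <= x -> 0 <= s -> 0 <= sigma -> sigma < 1 ->
 (forall k, (k <= n)%N -> 0 < t k /\ t k <= 1) ->
 (forall k, (k < n)%N -> t k <= t k.+1) ->
 \sum_(i < n) `|Fplus x s sigma (t i.+1) - Fplus x s sigma (t i)| <= 8 * expR 1 * (s + 1).
Proof.
move=> x0 s0 g0 g1 ht hm.
have e1 := @e_ge1 R.
have hb : forall i, (i <= n)%N -> 0 <= Fplus x s sigma (t i) <= expR 1 * (s + 1).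
  by move=> i hi; have [a b] := ht i hi; have [_ ?] := Fplus_bnd x s sigma (t i) x0 s0 g0 g1 a b.
have V := var_pp (fun k => Fplus x s sigma (t k)) n (expR 1 * (s + 1)) hb.
have hmon : forall k, (k < n)%N ->
   f1 x (t k) + f2 s (t k) <= f1 x (t k.+1) + f2 s (t k.+1) /\ (0:R) <= 0 /\
   hh x sigma (t k.+1) <= hh x sigma (t k).
  move=> k hk; have [a _] := ht k (ltnW hk); have := hm k hk => tk.
  split; last split => //; last exact: hh_le.
  by apply: lerD; [exact: f1_le|exact: f2_le].
have hb2 : forall k, (k <= n)%N -> (0:R) <= 0 /\
   Fplus x s sigma (t k) <= expR 1 * (s + 1) /\
   Fplus x s sigma (t k) = Num.min (f1 x (t k) + f2 s (t k) - 0) (hh x sigma (t k)).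
  move=> k hk; have [a b] := ht k hk.
  have [E /andP[_ ?]] := Fplus_bnd x s sigma (t k) x0 s0 g0 g1 a b.
  by rewrite subr0; split.
have f10 : 0 <= f1 x (t 0%N) + f2 s (t 0%N).
  have [a _] := ht 0%N (leq0n n).
  by apply: addr_ge0; [exact: f1_ge0|rewrite /f2 mulr_ge0 // expR_ge0].
have M0 : 0 <= expR 1 * (s + 1) by apply: mulr_ge0; lra.
have P := Pmin (fun k => Fplus x s sigma (t k)) (fun k => f1 x (t k) + f2 s (t k))
  (fun _ => 0) (fun k => hh x sigma (t k)) n _ 0 M0 (lexx 0) f10 hmon hb2.
simpl in V, P.
lra.
Qed.

Lemma var_minus x s sigma (t : nat -> R) n :
 0 <= x -> 0 <= s -> 0 <= sigma -> sigma < 1 ->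
 (forall k, (k <= n)%N -> 0 < t k /\ t k <= 1) ->
 (forall k, (k < n)%N -> t k <= t k.+1) ->
 \sum_(i < n) `|Fminus x s sigma (t i.+1) - Fminus x s sigma (t i)| <= 8 * expR 1 * (s + 1).
Proof.
move=> x0 s0 g0 g1 ht hm.
have e1 := @e_ge1 R.
pose a k := f1 x (t k). pose b k := f2 s (t k). pose h k := hh x sigma (t k).
pose u k := Num.min (a k - b k) (h k). pose v k := Num.min (b k - a k) (h k).
have a0 : forall k, (k <= n)%N -> 0 <= a k.
  by move=> k hk; have [p _] := ht k hk; exact: f1_ge0.
have b0 : forall k, (k <= n)%N -> 0 <= b k <= s * expR 1.
  move=> k hk; have [_ q] := ht k hk; rewrite /b /f2 mulr_ge0 ?expR_ge0 //=.
  by rewrite ler_wpM2l // E_le_e.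
have h0 : forall k, (k <= n)%N -> 0 <= h k.
  by move=> k hk; have [p _] := ht k hk; exact: hh_ge0.
have Fm : forall k, (k <= n)%N -> Fminus x s sigma (t k) = Num.max (pp (u k)) (pp (v k)).
  move=> k hk; have [p _] := ht k hk.
  by rewrite Fminus_eq // min_abs ?h0 // /u /v opprB.
have hmon : forall k, (k < n)%N -> a k <= a k.+1 /\ b k <= b k.+1 /\ h k.+1 <= h k.
  move=> k hk; have [p _] := ht k (ltnW hk); have := hm k hk => tk.
  split; [exact: f1_le|split; [exact: f2_le|exact: hh_le]].
have hmon' : forall k, (k < n)%N -> b k <= b k.+1 /\ a k <= a k.+1 /\ h k.+1 <= h k.
  by move=> k hk; have [? [? ?]] := hmon k hk.
have ue : forall k, (k <= n)%N -> u k <= expR 1.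
  move=> k hk; have [p q] := ht k hk; have := minf1h_le x sigma (t k) x0 g0 g1 p q.
  apply: le_trans; rewrite /u le_min !ge_min lexx orbT andbT.
  have := b0 k hk; move=> /andP[? ?]; apply/orP; left; rewrite /a; lra.
have ve : forall k, (k <= n)%N -> v k <= s * expR 1.
  move=> k hk; have := b0 k hk; have := a0 k hk; move=> ? /andP[? ?].
  rewrite /v ge_min; apply/orP; left; lra.
have S1 : \sum_(i < n) `|Fminus x s sigma (t i.+1) - Fminus x s sigma (t i)| <=
   \sum_(i < n) `|pp (u i.+1) - pp (u i)| + \sum_(i < n) `|pp (v i.+1) - pp (v i)|.
  rewrite -big_split /=; apply: ler_sum => i _.
  by rewrite !Fm ?max_var // ltnW.
have Vu := var_pp (fun k => pp (u k)) n (expR 1)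
   (fun k hk => pp_bnd _ _ (ue k hk) (ltac:(lra))).
have Vv := var_pp (fun k => pp (v k)) n (s * expR 1)
   (fun k hk => pp_bnd _ _ (ve k hk) (ltac:(apply: mulr_ge0; lra))).
simpl in Vu, Vv.
have Qu : \sum_(i < n) pp (pp (u i.+1) - pp (u i)) <= \sum_(i < n) pp (u i.+1 - u i).
  by apply: ler_sum => i _; exact: pp_pp.
have Qv : \sum_(i < n) pp (pp (v i.+1) - pp (v i)) <= \sum_(i < n) pp (v i.+1 - v i).
  by apply: ler_sum => i _; exact: pp_pp.
have Pu := Pmin u a b h n (expR 1) (s * expR 1) (ltac:(lra)) (ltac:(apply: mulr_ge0; lra))
   (a0 0%N (leq0n n)) hmon
   (fun k hk => conj (proj2 (andP (b0 k hk))) (conj (ue k hk) erefl)).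
have Pv := Pmin2 v b a h n hmon' (fun k hk => erefl).
have bn := b0 n (leqnn n); have b00 := b0 0%N (leq0n n).
move: bn b00 => /andP[? ?] /andP[? ?].
lra.
Qed.
End C.
Arguments var_plus {R}. Arguments var_minus {R}. Arguments pp_bnd {R}.

Local Open Scope classical_set_scope.

Theorem lemma5p4 (R : realType) :
  exists C : R, forall x s sigma rho : R,
    0 <= x -> 0 < s -> 1 / 2 < sigma < 1 -> 1 <= rho ->
    let T := Tcut x s sigma in
    [/\ (supabs (Fplus x s sigma) [set t : R | (0 < t <= T)%R] <= (C * (s + 1))%:E)%E,
        (supabs (Fminus x s sigma) [set t : R | (0 < t <= T)%R] <= (C * (s + 1))%:E)%E,
        (pvar rho (Fplus x s sigma) [set t : R | (0 < t <= T)%R] <= (C * (s + 1))%:E)%E &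
        (pvar rho (Fminus x s sigma) [set t : R | (0 < t <= T)%R] <= (C * (s + 1))%:E)%E].
Proof.
exists (8 * expR 1).
move=> x s sigma rho x0 s0 /andP[g1 g2] r1 T.
have g0 : 0 <= sigma by lra.
have s0' : 0 <= s by lra.
have e1 := @e_ge1 R.
have T1 : T <= 1.
  rewrite /T /Tcut.
  set S := [set t : R | _].
  have [[t0 St0]|nS] := pselect (S !=set0).
    apply: ge_sup; first by exists t0.
    by move=> y [/andP[_ ?] _].
  have -> : S = set0.
    by apply/seteqP; split => y // Sy; exfalso; apply: nS; exists y.
  by rewrite sup0; lra.
have It : forall t, 0 < t <= T -> 0 < t /\ t <= 1.
  by move=> t /andP[? ?]; split => //; lra.
split.
- rewrite /supabs; apply: ge_ereal_sup => _ [t /It [a b] <-]; rewrite lee_fin.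
  have [_ /andP[F0 F1]] := Fplus_bnd x s sigma t x0 s0' g0 g2 a b.
  rewrite ger0_norm //; nra.
- rewrite /supabs; apply: ge_ereal_sup => _ [t /It [a b] <-]; rewrite lee_fin.
  have /andP[F0 F1] := Fminus_bnd x s sigma t x0 s0' g0 g2 a b.
  rewrite ger0_norm //; nra.
- rewrite /pvar; apply: ge_ereal_sup => _ [n [t [hI [hinc ->]]]]; rewrite lee_fin.
  apply: le_trans (rho_le (fun i => `|Fplus x s sigma (t i.+1) - Fplus x s sigma (t i)|)
     n rho r1 (fun i => normr_ge0 _)) _.
  apply: var_plus => //.
    by move=> k hk; apply: It; exact: hI.
  by move=> k hk; apply: ltW; exact: hinc.
- rewrite /pvar; apply: ge_ereal_sup => _ [n [t [hI [hinc ->]]]]; rewrite lee_fin.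
  apply: le_trans (rho_le (fun i => `|Fminus x s sigma (t i.+1) - Fminus x s sigma (t i)|)
     n rho r1 (fun i => normr_ge0 _)) _.
  apply: var_minus => //.
    by move=> k hk; apply: It; exact: hI.
  by move=> k hk; apply: ltW; exact: hinc.
Qed.
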